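(* Let $1\le p\le q$, $n=p+q$, and let $\mu=(a_1,\dots,a_p\mid b_1,\dots,b_q)\in\mathbb{Z}^n$ be $\Delta^+(\mathfrak{k},\mathfrak{t})$-dominant with $\mu-\beta$ also $\Delta^+(\mathfrak{k},\mathfrak{t})$-dominant, and suppose $\mu\in\Lambda_{f,g}$ for some $1\le f\le p$, $1\le g\le q$. Let $\tau=(k_1,\dots,k_p\mid r_1,\dots,r_q)\in\Omega_{p,q}$. (a) If $\mu$ is a $\partial R$-weight and $k_1>a_1$, then there exists $\tau'=(k'_1,\dots,k'_p\mid r'_1,\dots,r'_q)\in\Omega_{p,q}$ with $\{\mu-\tau\}\gg\{\mu-\tau'\}$ and $$(k'_1,\dots,k'_p)=(a_1,\underbrace{a_1-1,\dots,a_1-1}_{h-1},k_{h+1},\dots,k_p),$$ where $h$ is the largest index with $k_h\ge a_1$. (b) If $\mu$ is a $\partial L$-weight and $r_1>b_1$, then there exists $\tau'=(k'_1,\dots,k'_p\mid r'_1,\dots,r'_q)\in\Omega_{p,q}$ with $\{\mu-\tau\}\gg\{\mu-\tau'\}$ and $$(r'_1,\dots,r'_q)=(b_1,\underbrace{b_1-1,\dots,b_1-1}_{h-1},r_{h+1},\dots,r_q),$$ where $h$ is the largest index with $r_h\ge b_1$.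
   Context: $\Delta^+(\mathfrak{k},\mathfrak{t})$-dominant means $a_1\ge\cdots\ge a_p\ge0$ and $b_1\ge\cdots\ge b_q\ge0$; $\beta=(1,0,\dots,0\mid1,0,\dots,0)$. $\Lambda_{f,g}$ is the set of such $\mu$ with $\sum_{i=1}^f a_i+\sum_{j=1}^g b_j>2pq-2(p-f)(q-g)$. $\mu$ is a $\partial R$-weight if $q\ge a_1\ge1$, $2p\ge b_1\ge p+1$ and $a_1+b_1\le 2p+q-1$; a $\partial L$-weight if $2q\ge a_1\ge q+1$, $p\ge b_1\ge 1$ and $a_1+b_1\le p+2q-1$. $\Omega_{p,q}$ is the set of $(x\mid y)\in\mathbb{Z}^n$ with $q\ge x_1\ge\cdots\ge x_p\ge0$ and $y_j=\#\{i\mid q-x_i\ge j\}$ ($1\le j\le q$). For $\nu\in\mathbb{Z}^n$, $\{\nu\}$ is obtained by taking absolute values of all coordinates and sorting the first $p$ and the last $q$ coordinates separately in decreasing order. $u\gg v$ means $u_i\ge v_i$ for all $i$ with strict inequality for some $i$. *)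

(* Defs.v *)
From mathcomp Require Import all_boot all_order all_algebra.
Set Implicit Arguments. Unset Strict Implicit. Unset Printing Implicit Defensive.
Import Order.TTheory GRing.Theory Num.Theory.
Local Open Scope ring_scope.

(* Weights mu = (a_1..a_p | b_1..b_q) are given by two functions nat -> int,
   read 1-based: a i for 1 <= i <= p, b j for 1 <= j <= q. Values outside
   these ranges are irrelevant. *)

Definition dom_dec (m : nat) (x : nat -> int) : Prop :=
  (forall i : nat, (1 <= i)%N -> (i < m)%N -> x i.+1 <= x i) /\ 0 <= x m.

Definition kdominant (p q : nat) (a b : nat -> int) : Prop :=
  dom_dec p a /\ dom_dec q b.

(* subtract 1 from the first coordinate (mu - beta) *)
Definition sub_first (x : nat -> int) : nat -> int :=
  fun i => if i == 1%N then x i - 1 else x i.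

Definition inLambda (p q f g : nat) (a b : nat -> int) : Prop :=
  kdominant p q a b /\
  (\sum_(1 <= i < f.+1) a i + \sum_(1 <= j < g.+1) b j >
     2%:R * (p * q)%:R - 2%:R * ((p - f) * (q - g))%:R).

Definition dR_weight (p q : nat) (a b : nat -> int) : Prop :=
  [/\ a 1%N <= q%:R, 1 <= a 1%N, b 1%N <= (2 * p)%:R, (p.+1)%:R <= b 1%N
    & a 1%N + b 1%N <= (2 * p + q)%:R - 1].

Definition dL_weight (p q : nat) (a b : nat -> int) : Prop :=
  [/\ a 1%N <= (2 * q)%:R, (q.+1)%:R <= a 1%N, b 1%N <= p%:R, 1 <= b 1%N
    & a 1%N + b 1%N <= (p + 2 * q)%:R - 1].

Definition inOmega (p q : nat) (x y : nat -> int) : Prop :=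
  [/\ x 1%N <= q%:R, dom_dec p x &
     forall j : nat, (1 <= j)%N -> (j <= q)%N ->
       y j = (count (fun i => j%:R <= q%:R - x i) (iota 1 p))%:R].

Definition brace (p q : nat) (x y : nat -> int) : seq nat :=
  sort geq [seq `|x i|%N | i <- iota 1 p] ++ sort geq [seq `|y j|%N | j <- iota 1 q].

Definition vsub (x y : nat -> int) : nat -> int := fun i => x i - y i.

Definition gg (u v : seq nat) : Prop :=
  size u = size v /\ all2 (fun s t => (t <= s)%N) u v /\ has (fun st => (st.2 < st.1)%N) (zip u v).

Definition lastidx (m : nat) (P : nat -> bool) : nat :=
  (\max_(1 <= i < m.+1 | P i) i)%N.

(* Main.v *)
Require Import Defs.
From mathcomp Require Import all_boot all_order all_algebra.
From mathcomp Require Import zify.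
Import Order.TTheory GRing.Theory Num.Theory.
Local Open Scope ring_scope.
Set Implicit Arguments. Unset Strict Implicit.

Lemma geq_trans' : transitive geq.
Proof. move=> x y z /= h1 h2; exact: leq_trans h2 h1. Qed.

Lemma sorted_nth_count (s : seq nat) (i x : nat) :
  sorted geq s -> (i < size s)%N -> (x <= nth 0%N s i)%N = (i < count (fun y => x <= y)%N s)%N.
Proof.
elim: s i => [//|y s IH] i /= Hs Hi.
have Hs' : sorted geq s by case: s Hs {IH Hi} => //= z s /andP[].
case: (leqP x y) => Hxy /=.
  case: i Hi => [|i] /= Hi; first by [].
  by rewrite IH // add1n ltnS.
have Hall : all (fun z => z < x)%N s.
  have: all (geq y) s.
    by move: Hs; rewrite (path_sortedE geq_trans') => /andP[].
  move/allP=> H; apply/allP=> z /H /= Hz; exact: leq_ltn_trans Hz Hxy.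
have -> : count (fun y0 => (x <= y0)%N) s = 0%N.
  apply/eqP; rewrite -leqn0 leqNgt -has_count; apply/hasPn => z /(allP Hall) /=.
  by rewrite -ltnNge.
case: i Hi => [|i] /= Hi; first by rewrite leqNgt Hxy.
apply/negbTE; rewrite -ltnNge; apply: (allP Hall); exact: mem_nth.
Qed.

Lemma count_all2 (u v : seq nat) (P : pred nat) :
  (forall x y, (y <= x)%N -> P y -> P x) ->
  all2 (fun s t => (t <= s)%N) u v -> (count P v <= count P u)%N.
Proof.
move=> HP; elim: u v => [|x u IH] [|y v] //= /andP[Hxy H].
apply: leq_add; last exact: IH.
by case: (P y) (HP x y Hxy) => //= ->.
Qed.

Lemma all2_nthP0 (u v : seq nat) :
  size u = size v ->
  (forall i, (i < size u)%N -> (nth 0%N v i <= nth 0%N u i)%N) ->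
  all2 (fun s t => (t <= s)%N) u v.
Proof.
elim: u v => [|x u IH] [|y v] //= [Hs] H.
rewrite (H 0%N) //=; apply: IH => // i Hi; exact: (H i.+1).
Qed.

Lemma perm_sortg (s : seq nat) : perm_eq (sort geq s) s.
Proof. by rewrite perm_sort perm_refl. Qed.

Lemma sort_dom (u v : seq nat) :
  size u = size v -> all2 (fun s t => (t <= s)%N) u v ->
  all2 (fun s t => (t <= s)%N) (sort geq u) (sort geq v).
Proof.
move=> Hs H; apply: all2_nthP0; first by rewrite !size_sort.
move=> i Hi.
have tot : total geq by move=> x y; exact: leq_total.
set x := nth 0%N (sort geq v) i.
rewrite sorted_nth_count //; last exact: sort_sorted.
have := leqnn x; rewrite {2}/x sorted_nth_count; last 2 first.
- exact: sort_sorted.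
- by rewrite size_sort -Hs -(size_sort geq).
move=> Hc; apply: (leq_trans Hc).
rewrite !(permP (perm_sortg _)).
apply: count_all2 H => a b Hab Hxb; exact: leq_trans Hxb Hab.
Qed.

Lemma has_strict (u v : seq nat) :
  all2 (fun s t => (t <= s)%N) u v -> (sumn v < sumn u)%N ->
  has (fun st => (st.2 < st.1)%N) (zip u v).
Proof.
elim: u v => [|x u IH] [|y v] //= /andP[Hxy H] Hsum.
case: (ltnP y x) => //= Hyx.
have Exy : y = x by apply/eqP; rewrite eqn_leq Hxy Hyx.
apply: IH => //; move: Hsum; rewrite Exy ltn_add2l //.
Qed.

Lemma all2_cat' (r : rel nat) (s1 s2 t1 t2 : seq nat) :
  size s1 = size t1 -> all2 r (s1 ++ s2) (t1 ++ t2) = all2 r s1 t1 && all2 r s2 t2.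
Proof.
elim: s1 t1 => [|x s1 IH] [|y t1] //= [Hs]; by rewrite IH // andbA.
Qed.

Lemma gg_of (u1 v1 u2 v2 : seq nat) :
  size u1 = size v1 -> size u2 = size v2 ->
  all2 (fun s t => (t <= s)%N) u1 v1 -> all2 (fun s t => (t <= s)%N) u2 v2 ->
  (sumn v1 + sumn v2 < sumn u1 + sumn u2)%N ->
  gg (sort geq u1 ++ sort geq u2) (sort geq v1 ++ sort geq v2).
Proof.
move=> S1 S2 A1 A2 Hs.
have B1 := @sort_dom _ _ S1 A1; have B2 := @sort_dom _ _ S2 A2.
have B : all2 (fun s t => (t <= s)%N) (sort geq u1 ++ sort geq u2) (sort geq v1 ++ sort geq v2).
  by rewrite all2_cat' ?size_sort // B1 B2.
split; first by rewrite !size_cat !size_sort S1 S2.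
split => //.
apply: has_strict => //.
rewrite !sumn_cat !(perm_sumn (perm_sortg _)) //.
Qed.

Lemma map_all2 (G G' : nat -> nat) m n :
  (forall i, (m <= i)%N -> (i < m + n)%N -> (G' i <= G i)%N) ->
  all2 (fun s t => (t <= s)%N) (map G (iota m n)) (map G' (iota m n)).
Proof.
elim: n m => [//|n IH] m H /=.
rewrite H ?leqnn ?addnS ?ltnS ?leq_addr //=.
apply: IH => i Hi Hi'; apply: H; [exact: ltnW | by rewrite addnS -addSn].
Qed.

Lemma sumn_all2 (u v : seq nat) : all2 (fun s t => (t <= s)%N) u v -> (sumn v <= sumn u)%N.
Proof.
elim: u v => [|x u IH] [|y v] //= /andP[H1 H2]; exact: leq_add H1 (IH _ H2).
Qed.

Lemma sumn_map_strict (G G' : nat -> nat) m n :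
  (forall i, (m <= i)%N -> (i < m + n.+1)%N -> (G' i <= G i)%N) -> (G' m < G m)%N ->
  (sumn (map G' (iota m n.+1)) < sumn (map G (iota m n.+1)))%N.
Proof.
move=> H Hm /=.
apply: leq_trans (_ : (G' m).+1 + sumn (map G' (iota m.+1 n)) <= _)%N => //.
apply: leq_add => //; apply: sumn_all2; apply: map_all2 => i Hi Hi'.
apply: H; [exact: ltnW | by rewrite addnS -addSn].
Qed.

Lemma dom_mono m x i j : dom_dec m x -> (1 <= i)%N -> (i <= j)%N -> (j <= m)%N -> x j <= x i.
Proof.
move=> [H _] Hi Hij; elim: j Hij => [|j IH]; first by rewrite leqn0 => /eqP ->.
rewrite leq_eqVlt => /orP[/eqP <- //|Hij] Hj.
apply: (le_trans _ (IH Hij (ltnW Hj))); apply: H => //; exact: leq_trans Hi Hij.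
Qed.

Lemma dom_nonneg m x i : dom_dec m x -> (1 <= i)%N -> (i <= m)%N -> 0 <= x i.
Proof.
move=> H Hi Him; apply: (le_trans _ (dom_mono H Hi Him (leqnn m))); by case: H.
Qed.

Lemma lastidx_ge m (P : nat -> bool) i : (1 <= i)%N -> (i <= m)%N -> P i -> (i <= lastidx m P)%N.
Proof.
move=> H1 H2 HP; rewrite /lastidx.
apply: (@leq_bigmax_seq _ _ _ (fun i => i)) => //.
by rewrite mem_index_iota H1 ltnS.
Qed.

Lemma lastidx_le m (P : nat -> bool) : (lastidx m P <= m)%N.
Proof.
rewrite /lastidx; apply/bigmax_leqP_seq => i; rewrite mem_index_iota ltnS => /andP[_ ->] //.
Qed.

Lemma lastidx_gt m (P : nat -> bool) i : (lastidx m P < i)%N -> (i <= m)%N -> ~~ P i.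
Proof.
move=> H1 H2; apply/negP => HP.
have := lastidx_ge (i:=i) (m:=m) (P:=P); rewrite H2 HP => /(_ (leq_ltn_trans (leq0n _) H1) isT isT) H3.
by move: (leq_ltn_trans H3 H1); rewrite ltnn.
Qed.

Lemma lastidx_down m (P : nat -> bool) i :
  (forall i j, (1 <= i)%N -> (i <= j)%N -> (j <= m)%N -> P j -> P i) ->
  (1 <= i)%N -> (i <= lastidx m P)%N -> P i.
Proof.
move=> Hd H1 H2; apply/negPn/negP => HnP.
have : (lastidx m P <= i.-1)%N.
  rewrite /lastidx; apply/bigmax_leqP_seq => j; rewrite mem_index_iota ltnS => /andP[Hj1 Hj2] HPj.
  rewrite -ltnS prednK //; rewrite ltnNge; apply/negP => Hij.
  by rewrite (Hd i j) in HnP.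
move=> H3; have := leq_trans H2 H3; case: i H1 {H2 H3 HnP} => //= i _.
by rewrite ltnn.
Qed.

Lemma count_up (P : pred nat) p i :
  (forall i j, (1 <= i)%N -> (i <= j)%N -> (j <= p)%N -> P i -> P j) ->
  (1 <= i)%N -> (i <= p)%N -> P i = (p < i + count P (iota 1 p))%N.
Proof.
move=> Hu H1 H2.
have E : iota 1 p = iota 1 i ++ iota i.+1 (p - i).
  by rewrite -{1}(subnKC H2) iotaD add1n.
rewrite E count_cat.
case HP: (P i).
- have A : count P (iota i.+1 (p - i)) = (p - i)%N.
    apply/eqP; rewrite -{2}(size_iota i.+1 (p - i)) -all_count; apply/allP => j; rewrite mem_iota => /andP[Hj1 Hj2].
    apply: (Hu i) => //; first exact: ltnW.
    lia.
  have B : (0 < count P (iota 1 i))%N.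
    rewrite -has_count; apply/hasP; exists i => //; by rewrite mem_iota H1 add1n ltnSn.
  apply/esym; rewrite A; lia.
- have A : count P (iota 1 i) = 0%N.
    apply/eqP; rewrite -leqn0 leqNgt -has_count; apply/hasPn => j; rewrite mem_iota add1n ltnS.
    move=> /andP[Hj1 Hj2]; apply/negP => HPj; by rewrite (Hu j i) in HP.
  have B := count_size P (iota i.+1 (p - i)); rewrite size_iota in B.
  apply/esym/negbTE; rewrite A; lia.
Qed.

Lemma sum_le_const (F : nat -> int) (c : int) m n :
  (forall i, (m <= i)%N -> (i < n)%N -> F i <= c) ->
  \sum_(m <= i < n) F i <= c * (n - m)%:R.
Proof.
move=> H; apply: (le_trans (ler_sum_nat (G := fun _ => c) _)).
  by move=> i /andP[H1 H2]; apply: H.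
by rewrite sumr_const_nat mulr_natr.
Qed.

Lemma RA p q f g a b j0 :
  (1 <= p)%N -> (p <= q)%N -> kdominant p q a b ->
  (1 <= f)%N -> (f <= p)%N -> (1 <= g)%N -> (g <= q)%N ->
  inLambda p q f g a b -> b 1%N <= (2 * p)%:R ->
  (1 <= j0)%N -> (j0 <= q)%N -> a 1%N + j0%:R <= q%:R + 1 -> p%:R <= b j0.
Proof.
move=> Hp Hpq [Da Db] Hf1 Hf2 Hg1 Hg2 [_ HL] Hb1 Hj1 Hj2 Ha1.
rewrite leNgt; apply/negP => Hbj.
have SA : \sum_(1 <= i < f.+1) a i <= a 1%N * (f.+1 - 1)%:R.
  apply: sum_le_const => i Hi1 Hi2; apply: dom_mono Da _ _ _ => //; lia.
have Bb : forall j, (1 <= j)%N -> (j <= q)%N -> b j <= (2 * p)%:R.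
  move=> j H1 H2; apply: le_trans Hb1; exact: dom_mono Db _ _ _.
case: (ltnP g j0) => Hgj.
- have SB : \sum_(1 <= j < g.+1) b j <= (2 * p)%:R * (g.+1 - 1)%:R.
    apply: sum_le_const => j H1 H2; apply: Bb => //; lia.
  move: HL SA SB Ha1 Hbj; rewrite subn1 /=; nia.
- have E : \sum_(1 <= j < g.+1) b j = \sum_(1 <= j < j0) b j + \sum_(j0 <= j < g.+1) b j.
    by apply: big_cat_nat; lia.
  rewrite E in HL.
  have SB1 : \sum_(1 <= j < j0) b j <= (2 * p)%:R * (j0 - 1)%:R.
    apply: sum_le_const => j H1 H2; apply: Bb => //; lia.
  have SB2 : \sum_(j0 <= j < g.+1) b j <= (p%:R - 1) * (g.+1 - j0)%:R.
    apply: sum_le_const => j H1 H2.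
    have Hjq : (j <= q)%N by lia.
    have := dom_mono Db Hj1 H1 Hjq.
    move: Hbj H2 Hg2 => Hbj H2 Hg2 Hle. lia.
  move: HL SA SB1 SB2 Ha1 Hbj; rewrite subn1 /=; nia.
Qed.

Lemma LA p q f g a b i0 :
  (1 <= p)%N -> (p <= q)%N -> kdominant p q a b ->
  (1 <= f)%N -> (f <= p)%N -> (1 <= g)%N -> (g <= q)%N ->
  inLambda p q f g a b -> a 1%N <= (2 * q)%:R ->
  (1 <= i0)%N -> (i0 <= p)%N -> b 1%N + i0%:R <= p%:R + 1 -> q%:R <= a i0.
Proof.
move=> Hp Hpq [Da Db] Hf1 Hf2 Hg1 Hg2 [_ HL] Ha1 Hj1 Hj2 Hb1.
rewrite leNgt; apply/negP => Haj.
have SB : \sum_(1 <= i < g.+1) b i <= b 1%N * (g.+1 - 1)%:R.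
  apply: sum_le_const => i Hi1 Hi2; apply: dom_mono Db _ _ _ => //; lia.
have Ba : forall j, (1 <= j)%N -> (j <= p)%N -> a j <= (2 * q)%:R.
  move=> j H1 H2; apply: le_trans Ha1; exact: dom_mono Da _ _ _.
case: (ltnP f i0) => Hgj.
- have SA : \sum_(1 <= j < f.+1) a j <= (2 * q)%:R * (f.+1 - 1)%:R.
    apply: sum_le_const => j H1 H2; apply: Ba => //; lia.
  move: HL SA SB Hb1 Haj; rewrite subn1 /=; nia.
- have E : \sum_(1 <= j < f.+1) a j = \sum_(1 <= j < i0) a j + \sum_(i0 <= j < f.+1) a j.
    by apply: big_cat_nat; lia.
  rewrite E in HL.
  have SA1 : \sum_(1 <= j < i0) a j <= (2 * q)%:R * (i0 - 1)%:R.
    apply: sum_le_const => j H1 H2; apply: Ba => //; lia.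
  have SA2 : \sum_(i0 <= j < f.+1) a j <= (q%:R - 1) * (f.+1 - i0)%:R.
    apply: sum_le_const => j H1 H2.
    have Hjq : (j <= p)%N by lia.
    have := dom_mono Da Hj1 H1 Hjq.
    move: Haj H2 Hf2 => Haj H2 Hf2 Hle. lia.
  move: HL SA1 SA2 SB Hb1 Haj; rewrite subn1 /=; nia.
Qed.

Lemma count_mono_in (s : seq nat) (P Q : pred nat) :
  (forall x, x \in s -> P x -> Q x) -> (count P s <= count Q s)%N.
Proof.
elim: s => [//|y s IH] H /=; apply: leq_add; last first.
  by apply: IH => x Hx; apply: H; rewrite inE Hx orbT.
by case HP: (P y) => //; rewrite (H y) // inE eqxx.
Qed.

Lemma sub_first_le p a i : dom_dec p (sub_first a) -> (2 <= i)%N -> (i <= p)%N -> a i <= a 1%N - 1.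
Proof.
move=> D H1 H2; have := dom_mono D (isT : (1 <= 1)%N) (ltnW H1) H2.
rewrite /sub_first /=; case: i H1 H2 => [|[|i]] //.
Qed.

Lemma partA p q (a b : nat -> int) f g (k r : nat -> int) :
  (1 <= p)%N -> (p <= q)%N ->
  kdominant p q a b ->
  kdominant p q (sub_first a) (sub_first b) ->
  (1 <= f)%N -> (f <= p)%N -> (1 <= g)%N -> (g <= q)%N ->
  inLambda p q f g a b ->
  inOmega p q k r ->
  dR_weight p q a b -> k 1%N > a 1%N ->
  let h := lastidx p (fun i => a 1%N <= k i) in
     exists k' r' : nat -> int,
       [/\ inOmega p q k' r',
           gg (brace p q (vsub a k) (vsub b r)) (brace p q (vsub a k') (vsub b r')) &
           forall i : nat, (1 <= i)%N -> (i <= p)%N ->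
             k' i = (if i == 1%N then a 1%N
                     else if (i <= h)%N then a 1%N - 1 else k i)].
Proof.
move=> Hp Hpq Kd Ksd Hf1 Hf2 Hg1 Hg2 HL [Hk1q Dk Hr] [Ha1q Ha1 Hb1 Hb1' Hab] Hk1 h.
have [Da Db] := Kd; have [Dsa Dsb] := Ksd.
set k' := fun i : nat => if i == 1%N then a 1%N else if (i <= h)%N then a 1%N - 1 else k i.
set r' := fun j : nat => (count (fun i => j%:R <= q%:R - k' i) (iota 1 p))%:R : int.
exists k', r'.
have Hh1 : (1 <= h)%N by apply: lastidx_ge => //; exact: ltW.
have Hhp : (h <= p)%N by apply: lastidx_le.
have Ph : forall i, (1 <= i)%N -> (i <= h)%N -> a 1%N <= k i.
  move=> i H1 H2; apply: (lastidx_down (P := fun i => a 1%N <= k i)) H1 H2.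
  move=> i0 j0 H1 H2 H3 H4; apply: le_trans H4 _; exact: dom_mono Dk H1 H2 H3.
have Ph' : forall i, (h < i)%N -> (i <= p)%N -> k i < a 1%N.
  move=> i H1 H2; have := lastidx_gt H1 H2; by rewrite -ltNge.
have Hai : forall i, (2 <= i)%N -> (i <= p)%N -> a i <= a 1%N - 1 by move=> i; exact: sub_first_le.
have Ha0 : forall i, (1 <= i)%N -> (i <= p)%N -> 0 <= a i by move=> i; exact: dom_nonneg.
have Hk0 : forall i, (1 <= i)%N -> (i <= p)%N -> 0 <= k i by move=> i; exact: dom_nonneg.
have Hkq : forall i, (1 <= i)%N -> (i <= p)%N -> k i <= q%:R.
  move=> i H1 H2; apply: le_trans Hk1q; exact: dom_mono Dk _ H1 H2.
have Hk'k : forall i, (1 <= i)%N -> (i <= p)%N -> k' i <= k i.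
  move=> i H1 H2; rewrite /k'; case: eqP => [->|Hi1]; first exact: ltW.
  case: ifP => Hih; last by [].
  have := Ph i H1 Hih; lia.
have Hk'lo : forall i, (1 <= i)%N -> (i <= h)%N -> a 1%N - 1 <= k' i.
  move=> i H1 H2; rewrite /k'; case: eqP => _; first lia. by rewrite H2.
have PA : forall i, (1 <= i)%N -> (i <= p)%N -> (`|vsub a k' i| <= `|vsub a k i|)%N.
  move=> i H1 H2'; rewrite /vsub.
    rewrite /k'; case: eqP => [->|Hi1]; first lia.
    case: ifP => Hih; last by [].
    have := Ph i H1 Hih; have := Hai i; have := Ha0 i H1 H2'; lia.
have PB : forall j, (1 <= j)%N -> (j <= q)%N -> (`|vsub b r' j| <= `|vsub b r j|)%N.
  move=> j H1 H2'; rewrite /vsub.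
    rewrite Hr // /r'.
    set c' := count _ _; set c := count _ _.
    have Hcc' : (c <= c')%N.
      apply: count_mono_in => i; rewrite mem_iota => /andP[Hi1 Hi2] /=.
      have Hip : (i <= p)%N by lia.
      have := Hk'k i Hi1 Hip; lia.
    have Hc'p : (c' <= p)%N by rewrite /c' -{2}(size_iota 1 p) count_size.
    case: (boolP (a 1%N + j%:R <= q%:R + 1)) => Hj.
      have := RA Hp Hpq Kd Hf1 Hf2 Hg1 Hg2 HL Hb1 H1 H2' Hj; lia.
    have -> : c' = c.
      apply: eq_in_count => i; rewrite mem_iota => /andP[Hi1 Hi2] /=.
      have Hip : (i <= p)%N by lia.
      rewrite /k'; case: eqP => [->|Hin1].
        apply/idP/idP; lia.
      case: ifP => Hih; last by [].
      have Hk := Ph i Hi1 Hih; apply/idP/idP; lia.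
    by [].
split.
- split; first by rewrite /k' eqxx.
  + split.
    * move=> i H1 H2; rewrite /k' (_ : (i.+1 == 1%N) = false); last by case: i H1 {H2}.
      case: (eqVneq i 1%N) => [Ei|Ni].
        subst i; case: ifP => H3; first lia.
        have := Ph' 2%N; rewrite ltnNge H3 /= => /(_ isT H2); lia.
      case: ifP => H3; first by rewrite (ltnW H3).
      case: ifP => H4.
        have := Ph' i.+1; rewrite ltnNge H3 => /(_ isT H2); lia.
      exact: (proj1 Dk).
    * rewrite /k'; case: eqP => _; first lia.
      case: ifP => _; first lia. exact: (proj2 Dk).
  + by move=> j _ _.
- rewrite /brace; apply: gg_of; rewrite ?size_map //.
  + apply: map_all2 => i H1 H2; apply: PA => //; lia.
  + apply: map_all2 => j H1 H2; apply: PB => //; lia.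
  + have S1 : (sumn [seq `|vsub a k' i| | i <- iota 1 p] < sumn [seq `|vsub a k i| | i <- iota 1 p])%N.
      rewrite -(prednK Hp); apply: sumn_map_strict => [i H1 H2|]; first by apply: PA => //; lia.
      rewrite /vsub /k' /=; lia.
    have S2 : (sumn [seq `|vsub b r' j| | j <- iota 1 q] <= sumn [seq `|vsub b r j| | j <- iota 1 q])%N.
      apply: sumn_all2; apply: map_all2 => j H1 H2; apply: PB => //; lia.
    lia.
- by move=> i _ _.
Qed.

Lemma count_false (Q : pred nat) s : (forall x, x \in s -> ~~ Q x) -> count Q s = 0%N.
Proof.
move=> H; apply/eqP; rewrite -leqn0 leqNgt -has_count; exact/hasPn.
Qed.

Lemma count_true (Q : pred nat) s : (forall x, x \in s -> Q x) -> count Q s = size s.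
Proof. move=> H; apply/eqP; rewrite -all_count; exact/allP. Qed.

Lemma count_seg (Q : pred nat) p c : (1 <= c)%N -> (c <= p)%N ->
  count Q (iota 1 p) = (count Q (iota 1 (p - c)) + Q (p - c).+1 + count Q (iota (p - c).+2 c.-1))%N.
Proof.
move=> H1 H2.
rewrite -{1}(subnK H2) iotaD count_cat add1n -addnA; congr (_ + _)%N.
case: c H1 H2 => // c _ _ /=; by rewrite addnS.
Qed.

Lemma partB p q (a b : nat -> int) f g (k r : nat -> int) :
  (1 <= p)%N -> (p <= q)%N ->
  kdominant p q a b ->
  kdominant p q (sub_first a) (sub_first b) ->
  (1 <= f)%N -> (f <= p)%N -> (1 <= g)%N -> (g <= q)%N ->
  inLambda p q f g a b ->
  inOmega p q k r ->
  dL_weight p q a b -> r 1%N > b 1%N ->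
     let h := lastidx q (fun j => b 1%N <= r j) in
     exists k' r' : nat -> int,
       [/\ inOmega p q k' r',
           gg (brace p q (vsub a k) (vsub b r)) (brace p q (vsub a k') (vsub b r')) &
           forall j : nat, (1 <= j)%N -> (j <= q)%N ->
             r' j = (if j == 1%N then b 1%N
                     else if (j <= h)%N then b 1%N - 1 else r j)].
Proof.
move=> Hp Hpq Kd Ksd Hf1 Hf2 Hg1 Hg2 HL [Hk1q Dk Hr] [Ha1q Ha1 Hb1 Hb1' Hab] Hr1 h.
have [Da Db] := Kd; have [Dsa Dsb] := Ksd.
have Hq : (1 <= q)%N by exact: leq_trans Hpq.
set c := `|b 1%N|%N.
have Hc : c%:R = b 1%N by rewrite /c; lia.
have Hc1 : (1 <= c)%N by rewrite /c; lia.
have Hcp : (c <= p)%N by rewrite /c; lia.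
set cnt := fun j : nat => count (fun i => j%:R <= q%:R - k i) (iota 1 p).
have KF : forall j i, (1 <= i)%N -> (i <= p)%N -> (j%:R <= q%:R - k i) = (p < i + cnt j)%N.
  move=> j i H1 H2; apply: count_up => // i0 j0 H3 H4 H5 H6.
  have := dom_mono Dk H3 H4 H5; lia.
have Hrc : forall j, (1 <= j)%N -> (j <= q)%N -> r j = (cnt j)%:R by move=> j H1 H2; rewrite Hr.
have Hcnt1 : (c.+1 <= cnt 1%N)%N.
  have := Hrc 1%N isT Hq; lia.
have Hbj : forall j, (2 <= j)%N -> (j <= q)%N -> b j <= b 1%N - 1 by move=> j; exact: sub_first_le.
have Hb0 : forall j, (1 <= j)%N -> (j <= q)%N -> 0 <= b j by move=> j; exact: dom_nonneg.
have Hkq : forall i, (1 <= i)%N -> (i <= p)%N -> k i <= q%:R.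
  move=> i H1 H2; apply: le_trans Hk1q; exact: dom_mono Dk _ H1 H2.
have Hk0 : forall i, (1 <= i)%N -> (i <= p)%N -> 0 <= k i by move=> i; exact: dom_nonneg.
have KQ1 : forall i, (1 <= i)%N -> (i <= p)%N -> (p.+1 <= i + c)%N -> k i <= q%:R - 1.
  move=> i H1 H2 H3; have := KF 1%N i H1 H2; rewrite (_ : (p < i + cnt 1%N)%N = true); last by lia.
  move=> /esym H; lia.
have rmono : forall j j', (1 <= j)%N -> (j <= j')%N -> (j' <= q)%N -> r j' <= r j.
  move=> j j' H1 H2 H3; have Hj : (j <= q)%N by lia.
  have Hj' : (1 <= j')%N by lia.
  rewrite !Hrc // ler_nat; apply: count_mono_in => i _ /=; lia.
have Hh1 : (1 <= h)%N by apply: lastidx_ge => //; exact: ltW.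
have Hhq : (h <= q)%N by apply: lastidx_le.
have Ph : forall j, (1 <= j)%N -> (j <= h)%N -> b 1%N <= r j.
  move=> j H1 H2; apply: (lastidx_down (P := fun j => b 1%N <= r j)) H1 H2.
  move=> i0 j0 H1 H2 H3 H4; apply: le_trans H4 _; exact: rmono.
have Ph' : forall j, (h < j)%N -> (j <= q)%N -> r j < b 1%N.
  move=> j H1 H2; have := lastidx_gt H1 H2; by rewrite -ltNge.
set k' := fun i : nat => if (i + c < p.+1)%N then q%:R else if (i + c == p.+1)%N then q%:R - 1 else k i : int.
set r' := fun j : nat => if j == 1%N then b 1%N else if (j <= h)%N then b 1%N - 1 else r j.
exists k', r'.
have Kcount : forall j, (1 <= j)%N -> (j <= q)%N ->
    r' j = (count (fun i => j%:R <= q%:R - k' i) (iota 1 p))%:R.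
  move=> j H1 H2.
  rewrite (count_seg _ Hc1 Hcp).
  rewrite (@count_false _ (iota 1 (p - c))); last first.
    move=> i; rewrite mem_iota => /andP[Hi1 Hi2]; rewrite /k'.
    rewrite (_ : (i + c < p.+1)%N = true); last by lia. lia.
  have E : count (fun i => j%:R <= q%:R - k' i) (iota (p - c).+2 c.-1) =
           count (fun i => j%:R <= q%:R - k i) (iota (p - c).+2 c.-1).
    apply: eq_in_count => i; rewrite mem_iota => /andP[Hi1 Hi2] /=; rewrite /k'.
    rewrite (_ : (i + c < p.+1)%N = false); last by lia.
    by rewrite (_ : (i + c == p.+1)%N = false); last by lia.
  rewrite E {E}.
  have Hmid : (j%:R <= q%:R - k' (p - c).+1) = (j == 1%N).
    rewrite /k' (_ : ((p - c).+1 + c < p.+1)%N = false); last by lia.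
    rewrite (_ : ((p - c).+1 + c == p.+1)%N = true); last by lia.
    apply/idP/eqP; lia.
  rewrite Hmid /r'.
  have Hcj := count_seg (fun i => j%:R <= q%:R - k i) Hc1 Hcp.
  case: (leqP j h) => Hjh.
  - have := Ph j H1 Hjh; rewrite Hrc // => Hcb.
    rewrite count_true; last first.
      move=> i; rewrite mem_iota => /andP[Hi1 Hi2]; rewrite KF; lia.
    rewrite size_iota.
    case: eqP => Ej; rewrite ?Ej /=; lia.
  - have := Ph' j Hjh H2; rewrite Hrc // => Hcb.
    have Ej : (j == 1%N) = false by apply/negbTE; lia.
    rewrite Ej /=.
    congr (_%:R); rewrite !add0n.
    rewrite /cnt Hcj.
    rewrite (@count_false _ (iota 1 (p - c))); last first.
      move=> i; rewrite mem_iota => /andP[Hi1 Hi2]; rewrite KF; lia.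
    rewrite KF; [|lia|lia].
    rewrite (_ : (p < (p - c).+1 + cnt j)%N = false) //; lia.
have PA : forall i, (1 <= i)%N -> (i <= p)%N -> (`|vsub a k' i| <= `|vsub a k i|)%N.
  move=> i H1 H2; rewrite /vsub /k'.
  case: (ltnP (i + c) p.+1) => A.
    have X : b 1%N + i%:R <= p%:R + 1 by rewrite -Hc; lia.
    have := LA Hp Hpq Kd Hf1 Hf2 Hg1 Hg2 HL Ha1q H1 H2 X; have := Hkq i H1 H2; lia.
  case: eqP => B; last by [].
  have X : b 1%N + i%:R <= p%:R + 1 by rewrite -Hc; lia.
  have := LA Hp Hpq Kd Hf1 Hf2 Hg1 Hg2 HL Ha1q H1 H2 X.
  have := KQ1 i H1 H2 A; lia.
have PB : forall j, (1 <= j)%N -> (j <= q)%N -> (`|vsub b r' j| <= `|vsub b r j|)%N.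
  move=> j H1 H2; rewrite /vsub /r'.
  case: eqP => [->|Hj1]; first lia.
  case: ifP => Hjh; last by [].
  have Hj2 : (2 <= j)%N by lia.
  have := Ph j H1 Hjh; have := Hbj j Hj2 H2; have := Hb0 j H1 H2; lia.
split.
- split.
  + rewrite /k'; case: ltnP => _; first lia.
    case: eqP => _; [lia | exact: Hk1q].
  + split.
    * move=> i H1 H2; rewrite /k'.
      case: (ltnP (i.+1 + c) p.+1) => A.
        rewrite (_ : (i + c < p.+1)%N = true); last by lia. lia.
      case: eqP => B.
        rewrite (_ : (i + c < p.+1)%N = true); last by lia. lia.
      rewrite (_ : (i + c < p.+1)%N = false); last by lia.
      case: eqP => C.
        have := KQ1 i.+1 (ltn0Sn _) H2; rewrite -C addSn => /(_ (leqnSn _)); lia.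
      exact: (proj1 Dk).
    * rewrite /k' (_ : (p + c < p.+1)%N = false); last by lia.
      case: eqP => _; [lia | exact: (proj2 Dk)].
  + move=> j H1 H2; exact: Kcount.
- rewrite /brace; apply: gg_of; rewrite ?size_map //.
  + apply: map_all2 => i H1 H2; apply: PA => //; lia.
  + apply: map_all2 => j H1 H2; apply: PB => //; lia.
  + have S2 : (sumn [seq `|vsub b r' j| | j <- iota 1 q] < sumn [seq `|vsub b r j| | j <- iota 1 q])%N.
      rewrite -(prednK Hq); apply: sumn_map_strict => [j H1 H2|]; first by apply: PB => //; lia.
      rewrite /vsub /r' /=; lia.
    have S1 : (sumn [seq `|vsub a k' i| | i <- iota 1 p] <= sumn [seq `|vsub a k i| | i <- iota 1 p])%N.
      apply: sumn_all2; apply: map_all2 => i H1 H2; apply: PA => //; lia.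
    lia.
- by move=> j _ _.
Qed.

Unset Implicit Arguments.

Theorem lemma3p2 (p q : nat) (a b : nat -> int) (f g : nat) (k r : nat -> int) :
  (1 <= p)%N -> (p <= q)%N ->
  kdominant p q a b ->
  kdominant p q (sub_first a) (sub_first b) ->
  (1 <= f)%N -> (f <= p)%N -> (1 <= g)%N -> (g <= q)%N ->
  inLambda p q f g a b ->
  inOmega p q k r ->
  (dR_weight p q a b -> k 1%N > a 1%N ->
     let h := lastidx p (fun i => a 1%N <= k i) in
     exists k' r' : nat -> int,
       [/\ inOmega p q k' r',
           gg (brace p q (vsub a k) (vsub b r)) (brace p q (vsub a k') (vsub b r')) &
           forall i : nat, (1 <= i)%N -> (i <= p)%N ->
             k' i = (if i == 1%N then a 1%N
                     else if (i <= h)%N then a 1%N - 1 else k i)]) /\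
  (dL_weight p q a b -> r 1%N > b 1%N ->
     let h := lastidx q (fun j => b 1%N <= r j) in
     exists k' r' : nat -> int,
       [/\ inOmega p q k' r',
           gg (brace p q (vsub a k) (vsub b r)) (brace p q (vsub a k') (vsub b r')) &
           forall j : nat, (1 <= j)%N -> (j <= q)%N ->
             r' j = (if j == 1%N then b 1%N
                     else if (j <= h)%N then b 1%N - 1 else r j)]).
Proof.
move=> Hp Hpq Kd Ksd Hf1 Hf2 Hg1 Hg2 HL HO; split.
- exact: partA Hp Hpq Kd Ksd Hf1 Hf2 Hg1 Hg2 HL HO.
- exact: partB Hp Hpq Kd Ksd Hf1 Hf2 Hg1 Hg2 HL HO.
Qed.
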